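(* Let $I$ be the $2\times2$ identity, $e_1=\begin{pmatrix}1&0\\0&-1\end{pmatrix}$, $e_2=\begin{pmatrix}0&1\\1&0\end{pmatrix}$, $E=e_1e_2$, and let $V=\mathrm{span}_{\mathbb{R}}\{e_1,e_2\}$ with the Euclidean norm for which $\{e_1,e_2\}$ is orthonormal, i.e. $\|\gamma_1e_1+\gamma_2e_2\|=\sqrt{\gamma_1^2+\gamma_2^2}$. Let $A,B\in M_2(\mathbb{R})$ with $A=\alpha_0I+\alpha_{12}E+u$ and $B=\beta_0I+\beta_{12}E+v$, where $\alpha_0,\alpha_{12},\beta_0,\beta_{12}\in\mathbb{R}$ and $u,v\in V$. Then there exists $P\in O(2)$ with $PAP^{-1}=B$ if and only if $\alpha_0=\beta_0$, $\alpha_{12}=\pm\beta_{12}$ and $\|u\|=\|v\|$.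
   Context: $O(2)=\{P\in M_2(\mathbb{R}): PP^t=I\}$ is the real orthogonal group. *)

(* Defs.v *)
From HB Require Import structures.
From mathcomp Require Import all_boot all_order all_algebra.
From mathcomp Require Export reals.
Set Implicit Arguments. Unset Strict Implicit. Unset Printing Implicit Defensive.
Import Order.TTheory GRing.Theory Num.Theory.
Local Open Scope ring_scope.

Definition e1 {R : realType} : 'M[R]_2 :=
  \matrix_(i < 2, j < 2) (if i == j then (if i == 0 then 1 else -1) else 0).
Definition e2 {R : realType} : 'M[R]_2 :=
  \matrix_(i < 2, j < 2) (if i == j then 0 else 1).
Definition EE {R : realType} : 'M[R]_2 := e1 *m e2.

Definition vecV {R : realType} (g1 g2 : R) : 'M[R]_2 := g1 *: e1 + g2 *: e2.
Definition normV {R : realType} (g1 g2 : R) : R := Num.sqrt (g1 ^+ 2 + g2 ^+ 2).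

Definition orth2 {R : realType} (P : 'M[R]_2) : Prop := P *m P^T = 1%:M.

(* Main.v *)
Require Import Defs.
From HB Require Import structures.
From mathcomp Require Import all_boot all_order all_algebra.
From mathcomp Require Import reals.
From mathcomp Require Import ring lra.
Import Order.TTheory GRing.Theory Num.Theory.
Local Open Scope ring_scope.

Lemma mx2P (R : realType) (M N : 'M[R]_2) :
  M 0 0 = N 0 0 -> M 0 1 = N 0 1 -> M 1 0 = N 1 0 -> M 1 1 = N 1 1 -> M = N.
Proof.
move=> h00 h01 h10 h11; apply/matrixP => i j.
have H2 : forall k : 'I_2, k = 0 \/ k = 1.
  by case => [[|[|k]] Hk]; [left; exact: val_inj | right; exact: val_inj | by []].
by case: (H2 i) => ->; case: (H2 j) => ->.
Qed.

Lemma sum2 (R : realType) (F : 'I_2 -> R) : \sum_(i < 2) F i = F 0 + F 1.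
Proof. rewrite big_ord_recl big_ord1; congr (_ + F _); exact: val_inj. Qed.


Definition FF {R : realType} (a0 a g1 g2 : R) : 'M[R]_2 :=
  \matrix_(i < 2, j < 2) if i == 0 then (if j == 0 then a0 + g1 else a + g2)
                         else (if j == 0 then g2 - a else a0 - g1).

Section S.
Variable R : realType.
Implicit Types (a c s : R) (M P X : 'M[R]_2).

Lemma F00 a0 a g1 g2 : FF a0 a g1 g2 0 0 = a0 + g1.
Proof. by rewrite mxE. Qed.
Lemma F01 a0 a g1 g2 : FF a0 a g1 g2 0 1 = a + g2.
Proof. by rewrite mxE. Qed.
Lemma F10 a0 a g1 g2 : FF a0 a g1 g2 1 0 = g2 - a.
Proof. by rewrite mxE. Qed.
Lemma F11 a0 a g1 g2 : FF a0 a g1 g2 1 1 = a0 - g1.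
Proof. by rewrite mxE. Qed.

Lemma FFE a0 a g1 g2 : a0%:M + a *: EE + vecV g1 g2 = FF a0 a g1 g2.
Proof. apply: mx2P; rewrite /FF /EE /vecV /e1 /e2 !mxE !sum2 !mxE /=; ring. Qed.

Lemma orthT P : orth2 P -> P^T *m P = 1%:M.
Proof. by move/mulmx1C. Qed.

Arguments orthT {P}.
Lemma tr_conj P X : orth2 P -> \tr (P *m X *m P^T) = \tr X.
Proof.
move=> hP; rewrite mxtrace_mulC mulmxA (orthT hP) mul1mx //.
Qed.

Arguments tr_conj {P}.
Lemma sq_conj P X : orth2 P ->
  (P *m X *m P^T) *m (P *m X *m P^T) = P *m (X *m X) *m P^T.
Proof.
move=> hP; rewrite -!mulmxA; do 2 congr (_ *m _).
by rewrite mulmxA (orthT hP) mul1mx.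
Qed.

Arguments sq_conj {P}.
Lemma tsq_conj P X : orth2 P ->
  (P *m X *m P^T) *m (P *m X *m P^T)^T = P *m (X *m X^T) *m P^T.
Proof.
move=> hP; rewrite !trmx_mul !trmxK -!mulmxA; do 2 congr (_ *m _).
by rewrite (mulmxA P^T P) (orthT hP) mul1mx.
Qed.


Arguments tsq_conj {P}.
Lemma invariants a0 a g1 g2 b0 b d1 d2 P :
  orth2 P -> P *m FF a0 a g1 g2 *m P^T = FF b0 b d1 d2 ->
  [/\ a0 = b0, (a = b \/ a = - b) & g1 ^+ 2 + g2 ^+ 2 = d1 ^+ 2 + d2 ^+ 2].
Proof.
move=> hP hB.
have h1 := tr_conj (FF a0 a g1 g2) hP.
have h2 := tr_conj (FF a0 a g1 g2 *m FF a0 a g1 g2) hP.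
have h3 := tr_conj (FF a0 a g1 g2 *m (FF a0 a g1 g2)^T) hP.
rewrite -sq_conj // in h2; rewrite -tsq_conj // in h3.
rewrite hB in h1 h2 h3.
move: h1 h2 h3; rewrite /mxtrace !sum2 !mxE !sum2 !mxE /= => h1 h2 h3.
have e0 : a0 = b0 by lra.
subst b0.
have ea : a ^+ 2 = b ^+ 2 by nra.
split => //; last by nra.
have : (a - b) * (a + b) = 0.
  by transitivity (a ^+ 2 - b ^+ 2); [ring | rewrite ea subrr].
move/eqP; rewrite mulf_eq0 => /orP [/eqP h|/eqP h].
  by left; lra.
by right; lra.
Qed.

Arguments invariants {a0 a g1 g2 b0 b d1 d2 P}.
Definition refl c s : 'M[R]_2 :=
  \matrix_(i < 2, j < 2) if i == 0 then (if j == 0 then c else s)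
                         else (if j == 0 then s else - c).

Lemma refl_ok a0 a g1 g2 c s : c ^+ 2 + s ^+ 2 = 1 ->
  orth2 (refl c s) /\
  refl c s *m FF a0 a g1 g2 *m (refl c s)^T =
  FF a0 (- a) ((c^+2 - s^+2) * g1 + 2 * c * s * g2)
              (2 * c * s * g1 - (c^+2 - s^+2) * g2).
Proof.
move=> hcs; split.
  rewrite /orth2; apply: mx2P; rewrite !mxE !sum2 !mxE /=; 
    rewrite ?sum2 ?mxE /=; lra.
have -> : FF a0 (- a) ((c^+2 - s^+2) * g1 + 2 * c * s * g2)
              (2 * c * s * g1 - (c^+2 - s^+2) * g2) =
          FF (a0 * (c ^+ 2 + s ^+ 2)) (- a * (c ^+ 2 + s ^+ 2))
             ((c^+2 - s^+2) * g1 + 2 * c * s * g2)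
              (2 * c * s * g1 - (c^+2 - s^+2) * g2) by rewrite hcs !mulr1.
apply: mx2P; rewrite !mxE !sum2 !mxE /= !sum2 !mxE /=; ring.
Qed.

Arguments refl_ok a0 a g1 g2 {c s}.
Lemma half_angle C S : C ^+ 2 + S ^+ 2 = 1 ->
  exists c s, [/\ c ^+ 2 + s ^+ 2 = 1, c ^+ 2 - s ^+ 2 = C & 2 * c * s = S].
Proof.
move=> h.
have [hC|hC] := eqVneq C (-1).
  have hS : S = 0.
    have : S ^+ 2 = 0 by rewrite hC in h; lra.
    by move/eqP; rewrite expf_eq0 /= => /eqP.
  exists 0, 1; split; rewrite ?hC ?hS; ring.
have hpos : 0 < 1 + C.
  have : C ^+ 2 <= 1 by nra.
  have : C != -1 := hC.
  move=> hn hle.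
  have : -1 <= C by nra.
  rewrite le_eqVlt => /orP [/eqP e|l]; first by rewrite e eqxx in hn.
  lra.
pose c : R := Num.sqrt ((1 + C) / 2).
have hc2 : c ^+ 2 = (1 + C) / 2 by rewrite sqr_sqrtr //; apply: divr_ge0; lra.
have hc0 : c != 0.
  apply/eqP => e; move: hc2; rewrite e expr0n /=; lra.
have hS2 : S ^+ 2 = (1 - C) * (1 + C) by lra.
have hs2 : (S / (2 * c)) ^+ 2 = (1 - C) / 2.
  rewrite expr_div_n exprMn hc2 hS2; field; exact: lt0r_neq0.
exists c, (S / (2 * c)).
split.
- rewrite hc2 hs2; lra.
- rewrite hc2 hs2; lra.
- field; exact: hc0.
Qed.

Arguments half_angle {C S}.
Lemma refl_exists g1 g2 d1 d2 :
  g1 ^+ 2 + g2 ^+ 2 = d1 ^+ 2 + d2 ^+ 2 ->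
  exists c s, [/\ c ^+ 2 + s ^+ 2 = 1,
    (c^+2 - s^+2) * g1 + 2 * c * s * g2 = d1 &
    2 * c * s * g1 - (c^+2 - s^+2) * g2 = d2].
Proof.
move=> h.
set r := g1 ^+ 2 + g2 ^+ 2.
have [r0|r0] := eqVneq r 0.
  have eg1 : g1 = 0 by move: r0; rewrite /r; nra.
  have eg2 : g2 = 0 by move: r0; rewrite /r; nra.
  have ed1 : d1 = 0 by move: r0; rewrite /r h; nra.
  have ed2 : d2 = 0 by move: r0; rewrite /r h; nra.
  exists 1, 0; rewrite eg1 eg2 ed1 ed2; split; ring.
pose C := (d1 * g1 - d2 * g2) / r.
pose S := (d1 * g2 + d2 * g1) / r.
have key : (d1 * g1 - d2 * g2) ^+ 2 + (d1 * g2 + d2 * g1) ^+ 2 = r * r.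
  by rewrite {2}/r h /r; ring.
have hCS : C ^+ 2 + S ^+ 2 = 1.
  have -> : C ^+ 2 + S ^+ 2 =
    ((d1 * g1 - d2 * g2) ^+ 2 + (d1 * g2 + d2 * g1) ^+ 2) / (r * r).
    by rewrite /C /S; field; exact: r0.
  by rewrite key divff // mulf_neq0.
have [c [s [h1 h2 h3]]] := half_angle hCS.
exists c, s; split => //; rewrite h2 h3 /C /S.
- rewrite -[d1 in RHS](mulfK r0) /r; field; exact: r0.
- rewrite -[d2 in RHS](mulfK r0) /r; field; exact: r0.
Qed.

Arguments refl_exists {g1 g2 d1 d2}.
Definition Rel M X := exists P, orth2 P /\ P *m M *m P^T = X.

Lemma Rel_trans M X Y : Rel M X -> Rel X Y -> Rel M Y.
Proof.
move=> [P [hP e1']] [Q [hQ e2']]; exists (Q *m P); split.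
  by rewrite /orth2 trmx_mul mulmxA -(mulmxA Q P) hP mulmx1 hQ.
by rewrite -e2' -e1' trmx_mul !mulmxA.
Qed.

Arguments Rel_trans {M X Y}.
Lemma Rel_flip a0 a g1 g2 d1 d2 :
  g1 ^+ 2 + g2 ^+ 2 = d1 ^+ 2 + d2 ^+ 2 ->
  Rel (FF a0 a g1 g2) (FF a0 (- a) d1 d2).
Proof.
move=> h; have [c [s [h1 h2 h3]]] := refl_exists h.
have [ho he] := refl_ok a0 a g1 g2 h1.
by exists (refl c s); rewrite he h2 h3.
Qed.

Lemma orth_inv P : orth2 P -> invmx P = P^T.
Proof.
move=> hP; have [uP _] := mulmx1_unit hP.
by rewrite -[invmx P]mulmx1 -hP mulmxA mulVmx // mul1mx.
Qed.

Arguments orth_inv {P}.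
End S.
Arguments invariants {R a0 a g1 g2 b0 b d1 d2 P}.
Arguments orth_inv {R P}.
Arguments Rel_trans {R M X Y}.

Theorem mainTheorem9 (R : realType) (A B : 'M[R]_2)
  (a0 a12 b0 b12 g1 g2 d1 d2 : R) :
  A = a0%:M + a12 *: EE + vecV g1 g2 ->
  B = b0%:M + b12 *: EE + vecV d1 d2 ->
  (exists P : 'M[R]_2, orth2 P /\ P *m A *m invmx P = B) <->
  [/\ a0 = b0, (a12 = b12 \/ a12 = - b12) & normV g1 g2 = normV d1 d2].
Proof.
move=> -> ->; rewrite !FFE; split.
  move=> [P [hP e]]; rewrite orth_inv // in e.
  have [-> hab hn] := invariants hP e.
  by split => //; rewrite /normV hn.
move=> [<- hab hn].
have hsq : g1 ^+ 2 + g2 ^+ 2 = d1 ^+ 2 + d2 ^+ 2.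
  move: hn; rewrite /normV => /(congr1 (fun x => x ^+ 2)).
  by rewrite !sqr_sqrtr ?addr_ge0 ?sqr_ge0.
suff [P [hP e]] : @Rel R (FF a0 a12 g1 g2) (FF a0 b12 d1 d2).
  by exists P; rewrite orth_inv.
case: hab => ->.
  apply: (Rel_trans (X := FF a0 (- b12) g1 g2)); first exact: Rel_flip.
  by rewrite -[X in FF _ X d1 d2]opprK; apply: Rel_flip.
by rewrite -[X in FF _ X d1 d2]opprK; apply: Rel_flip.
Qed.
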